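(* Let $n$ be odd. The permutation representation of $S_n$ over $\mathbb{C}$ arising from the action of $S_n$ (by $\pi\cdot S=\pi(S)$) on the set of even-sized subsets of $\{1,\dots,n\}$ does not unite conjugacy classes.
   Context: A representation $T$ of $G$ unites conjugacy classes if there are non-conjugate $\sigma,\tau\in G$ with $T(\sigma),T(\tau)$ similar matrices. *)

(* Defs.v *)
From mathcomp Require Import all_boot all_order all_algebra all_fingroup all_field.
Set Implicit Arguments. Unset Strict Implicit. Unset Printing Implicit Defensive.
Import GRing.Theory.
Local Open Scope ring_scope.

(* Even-sized subsets of {0,...,n-1} (= {1,...,n} shifted). *)
Definition even_subset (n : nat) := {A : {set 'I_n} | ~~ odd #|A|}.

Definition nev (n : nat) : nat := #|{: even_subset n}|.

Definition permrep (n : nat) (s : 'S_n) : 'M[algC]_(nev n) :=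
  \matrix_(i < nev n, j < nev n)
    ((val (@enum_val (even_subset n) predT i)
      == s @: val (@enum_val (even_subset n) predT j)) %:R).

Definition unites_classes (n : nat) (T : 'S_n -> 'M[algC]_(nev n)) : Prop :=
  exists s t : 'S_n, t \notin (s ^: [set: 'S_n])%g /\ similar_in unitmx (T s) (T t).

(* Main.v *)
Require Import Defs.
From mathcomp Require Import all_boot all_order all_algebra all_fingroup all_field all_solvable.
From mathcomp Require Import zify.
Set Implicit Arguments. Unset Strict Implicit. Unset Printing Implicit Defensive.

Module Part1.

Local Open Scope group_scope.
Section Orb.
Variable T : finType.
Implicit Types (s t : {perm T}) (x y z : T).

Lemma porbit_gt0 s x : 0 < #|porbit s x|.
Proof. by rewrite lt0n card_porbit_neq0. Qed.

Lemma expmod s x i : (s ^+ i) x = (s ^+ (i %% #|porbit s x|)) x.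
Proof.
set l := #|porbit s x|.
have H q : (s ^+ (q * l)) x = x.
  elim: q => [|q IH]; first by rewrite mul0n expg0 perm1.
  by rewrite mulSn expgD permM [(s ^+ l) x]permX iter_porbit IH.
by rewrite {1}(divn_eq i l) expgD permM H.
Qed.

Lemma exp_inj_lt s x i j : i < #|porbit s x| -> j < #|porbit s x| ->
  (s ^+ i) x = (s ^+ j) x -> i = j.
Proof.
move=> hi hj e; apply/eqP.
rewrite -(nth_uniq x _ _ (uniq_traject_porbit s x)) ?size_traject //.
by rewrite !nth_traject // -!permX e.
Qed.

Lemma exp_eq s x i j :
  ((s ^+ i) x == (s ^+ j) x) = (i == j %[mod #|porbit s x|]).
Proof.
apply/eqP/eqP => [e|e]; last by rewrite expmod e -expmod.
apply: (@exp_inj_lt s x); rewrite ?ltn_mod ?porbit_gt0 //.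
by rewrite -!expmod.
Qed.

Lemma exp_fix s x i : ((s ^+ i) x == x) = (#|porbit s x| %| i).
Proof.
by have := exp_eq s x i 0; rewrite expg0 perm1 mod0n => ->.
Qed.

Lemma porbit_eq s x z : z \in porbit s x -> porbit s z = porbit s x.
Proof. by rewrite -eq_porbit_mem => /eqP. Qed.

End Orb.

End Part1.
Import Part1.

Module Part2.
Local Open Scope group_scope.

Section Conj.
Variable T : finType.
Implicit Types (s t : {perm T}) (x y z : T) (A B : {set T}).

Lemma closed_porbit s A x : (forall z, z \in A -> s z \in A) -> x \in A ->
  porbit s x \subset A.
Proof.
move=> cA xA; apply/subsetP => z /porbitP [i ->].
elim: i => [|i IH]; first by rewrite expg0 perm1.
by rewrite expgSr permM cA.
Qed.

Lemma closedD s A x : (forall z, z \in A -> s z \in A) ->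
  forall z, z \in A :\: porbit s x -> s z \in A :\: porbit s x.
Proof.
move=> cA z; rewrite !inE => /andP[zO zA]; rewrite cA // andbT.
apply: contra zO => szO.
have := porbit_eq szO; rewrite -(expg1 s) porbit_perm => <-.
exact: porbit_id.
Qed.

Lemma card_split A (O : {set T}) (P : pred T) : O \subset A ->
  #|[set z in A | P z]| = #|[set z in A :\: O | P z]| + #|[set z in O | P z]|.
Proof.
move=> sOA; rewrite -(cardsID O [set z in A | P z]) addnC; congr (_ + _).
  by apply: eq_card => z; rewrite !inE andbA.
apply: eq_card => z; rewrite !inE; case zO: (z \in O); last by rewrite andbF.
have h : z \in A by exact: (subsetP sOA).
by rewrite h andbT.
Qed.

Lemma card_orb_l s x l :
  #|[set z in porbit s x | #|porbit s z| == l]| =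
  if #|porbit s x| == l then #|porbit s x| else 0.
Proof.
case: ifP => e.
  by apply: eq_card => z; rewrite !inE; case zO: (z \in _) => //=; rewrite (porbit_eq zO).
apply/eqP; rewrite cards_eq0; apply/eqP/setP => z; rewrite !inE.
by case zO: (z \in _) => //=; rewrite (porbit_eq zO) e.
Qed.

Lemma conj_ind s t m : forall A B, #|A| <= m ->
  (forall z, z \in A -> s z \in A) -> (forall z, z \in B -> t z \in B) ->
  (forall l, #|[set z in A | #|porbit s z| == l]| =
             #|[set z in B | #|porbit t z| == l]|) ->
  exists f : T -> T, [/\ {in A &, injective f}, f @: A = B &
                         {in A, forall z, f (s z) = t (f z)}].
Proof.
elim: m => [|m IH] A B hA cA cB hc.
  have A0 : A = set0 by apply/eqP; rewrite -cards_eq0 -leqn0.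
  have B0 : B = set0.
    apply/setP => z; rewrite inE.
    apply/negbTE/negP => zB.
    have := hc #|porbit t z|; rewrite A0.
    have -> : [set z0 in set0 | #|porbit s z0| == #|porbit t z|] = set0.
      by apply/setP => w; rewrite !inE.
    rewrite cards0 => /esym/eqP; rewrite cards_eq0 => /eqP S0.
    have : z \in [set z0 in B | #|porbit t z0| == #|porbit t z|].
      by rewrite !inE zB eqxx.
    by rewrite S0 inE.
  by exists id; rewrite A0 B0 imset0; split => // ? ; rewrite inE.
case: (set_0Vmem A) => [A0|[x xA]].
  by apply: (IH A B) => //; rewrite A0 cards0.
set l := #|porbit s x|.
have : 0 < #|[set z in B | #|porbit t z| == l]|.
  by rewrite -hc card_gt0; apply/set0Pn; exists x; rewrite !inE xA eqxx.
rewrite card_gt0 => /set0Pn [y]; rewrite !inE => /andP [yB /eqP ly].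
set Oa := porbit s x; set Ob := porbit t y.
have sOa : Oa \subset A by exact: closed_porbit.
have sOb : Ob \subset B by exact: closed_porbit.
have [f' [f'i f'A f's]] : exists f' : T -> T,
    [/\ {in A :\: Oa &, injective f'}, f' @: (A :\: Oa) = B :\: Ob &
        {in A :\: Oa, forall z, f' (s z) = t (f' z)}].
  apply: IH.
  - rewrite -ltnS; apply: leq_trans hA.
    rewrite (cardsD1 x A) xA add1n ltnS subset_leq_card //.
    by apply/subsetP => z; rewrite !inE => /andP [zO ->]; rewrite andbT;
       apply: contra zO => /eqP ->; exact: porbit_id.
  - exact: closedD.
  - exact: closedD.
  - move=> k; have := hc k; rewrite (card_split _ sOa) (card_split _ sOb).
    by rewrite !card_orb_l -/l ly => /addIn.
pose idx z := index z (traject s x l).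
have idxP z : z \in Oa -> (s ^+ idx z) x = z.
  move=> zO; have zt : z \in traject s x l by rewrite -porbit_traject.
  have hi : idx z < l by rewrite -(size_traject s x l) index_mem.
  by rewrite permX -(nth_traject s hi x) nth_index.
pose f z := if z \in Oa then (t ^+ idx z) y else f' z.
have fO i : f ((s ^+ i) x) = (t ^+ i) y.
  rewrite /f mem_porbit; apply/eqP; rewrite exp_eq ly -(exp_eq s x).
  by rewrite idxP ?mem_porbit.
have fOb z : z \in Oa -> f z \in Ob.
  by move=> /porbitP [i ->]; rewrite fO mem_porbit.
have fA' z : z \in A :\: Oa -> f z = f' z.
  by rewrite /f inE => /andP [/negbTE -> _].
exists f; split.
- move=> z w zA wA.
  case zO: (z \in Oa); case wO: (w \in Oa).
  + move: zO wO => /porbitP [i ->] /porbitP [j ->]; rewrite !fO.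
    by move/eqP; rewrite exp_eq ly -(exp_eq s x) => /eqP.
  + move=> e; have : f w \in B :\: Ob.
      rewrite fA'; last by rewrite inE wO.
      by rewrite -f'A imset_f // inE wO.
    by rewrite -e inE fOb.
  + move=> e; have : f z \in B :\: Ob.
      rewrite fA'; last by rewrite inE zO.
      by rewrite -f'A imset_f // inE zO.
    by rewrite e inE fOb.
  + rewrite !fA' ?inE ?zO ?wO //; apply: f'i; by rewrite inE ?zO ?wO.
- apply/setP => w; apply/imsetP/idP.
  + move=> [z zA ->]; case zO: (z \in Oa).
      by rewrite (subsetP sOb) ?fOb.
    have zA' : z \in A :\: Oa by rewrite inE zO.
    by rewrite fA' // (subsetP (subsetDl B Ob)) // -f'A imset_f.
  + move=> wB; case wO: (w \in Ob).
      move: wO => /porbitP [i ->]; exists ((s ^+ i) x); last by rewrite fO.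
      by rewrite (subsetP sOa) ?mem_porbit.
    have : w \in f' @: (A :\: Oa) by rewrite f'A inE wO.
    move=> /imsetP [z zA' ->]; exists z; first by move: zA'; rewrite inE => /andP[].
    by rewrite fA'.
- move=> z zA; case zO: (z \in Oa).
    move: zO => /porbitP [i ->].
    by rewrite -permM -expgSr fO fO expgSr permM.
  have zA' : z \in A :\: Oa by rewrite inE zO.
  by rewrite !fA' ?f's // closedD.
Qed.

Lemma conj_cnt s t :
  (forall l, #|[set z | #|porbit s z| == l]| = #|[set z | #|porbit t z| == l]|) ->
  t \in (s ^: [set: {perm T}]).
Proof.
move=> hc.
have cS (u : {perm T}) : forall z, z \in [set: T] -> u z \in [set: T].
  by move=> z _; rewrite inE.
have hc' l : #|[set z in [set: T] | #|porbit s z| == l]| =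
             #|[set z in [set: T] | #|porbit t z| == l]|.
  have := hc l; congr (_ = _); apply: eq_card => z; rewrite !inE //.
have [f [fi fA fs]] := @conj_ind s t #|T| setT setT (max_card _) (cS s) (cS t) hc'.
have finj : injective f by move=> a b; apply: fi; rewrite inE.
apply/imsetP; exists (perm finj); first by rewrite inE.
apply/permP => z; rewrite conjgE !permM.
set w := (perm finj)^-1 z.
have e : z = f w by rewrite -{1}(permKV (perm finj) z) permE.
by rewrite {1}e -fs ?inE // permE.
Qed.

End Conj.

End Part2.
Import Part2.

Module Part3.
Lemma dvd_mul_gcd l k j : 0 < l ->
  (l %| k * j) = (l %/ gcdn l k %| j).
Proof.
move=> l0; set g := gcdn l k.
have g0 : 0 < g by rewrite gcdn_gt0 l0.
have el : l = l %/ g * g by rewrite divnK // dvdn_gcdl.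
have ek : k = k %/ g * g by rewrite divnK // dvdn_gcdr.
have cop : coprime (l %/ g) (k %/ g).
  rewrite /coprime; apply/eqP.
  have : gcdn (l %/ g * g) (k %/ g * g) = g by rewrite -el -ek.
  rewrite -muln_gcdl => /eqP; rewrite -[X in _ == X](mul1n g) eqn_pmul2r // => /eqP.
  done.
rewrite {1}el {1}ek -mulnA [g * j]mulnC mulnA dvdn_pmul2r //.
by rewrite Gauss_dvdr.
Qed.

Local Open Scope group_scope.
Section Orb2.
Variable T : finType.
Implicit Types (s t : {perm T}) (x y z : T).

Lemma porbit_expg s x k :
  #|porbit (s ^+ k) x| = #|porbit s x| %/ gcdn #|porbit s x| k.
Proof.
apply/eqP; rewrite eqn_dvd; apply/andP; split.
  by rewrite -exp_fix -expgM exp_fix dvd_mul_gcd ?porbit_gt0.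
by rewrite -dvd_mul_gcd ?porbit_gt0 // -exp_fix expgM exp_fix.
Qed.

End Orb2.

End Part3.
Import Part3.

Module Part4.
Import GRing.Theory Num.Theory.

Section Cnt.
Variable T : finType.
Implicit Types (s t : {perm T}) (x y z : T).
Local Open Scope ring_scope.

Lemma porbits_sum s :
  (#|porbits s|%:R : rat) = \sum_x (#|porbit s x|%:R)^-1.
Proof.
rewrite (partition_big_imset (porbit s)) /= -/(porbits s).
rewrite -sumr_const; apply: eq_bigr => _ /imsetP [x0 _ ->].
rewrite (eq_bigl (fun i => i \in porbit s x0)); last first.
  by move=> i; rewrite eq_porbit_mem.
rewrite (eq_bigr (fun _ => (#|porbit s x0|%:R)^-1)); last first.
  by move=> i /porbit_eq ->.
by rewrite sumr_const -[_ *+ #|_|]mulr_natr mulVf // pnatr_eq0 -lt0n porbit_gt0.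
Qed.

End Cnt.

End Part4.
Import Part4.

Module Part5.
Import GRing.Theory Num.Theory.

Lemma gcd_tot l k : 0 < k ->
  gcdn l k = \sum_(d < k.+1 | d %| k) (d %| l) * totient d.
Proof.
move=> k0; rewrite -{1}(sum_totient_dvd (gcdn l k)).
have g0 : 0 < gcdn l k by rewrite gcdn_gt0 k0 orbT.
have gk : gcdn l k < k.+1 by rewrite ltnS dvdn_leq // dvdn_gcdr.
rewrite (@big_ord_widen_cond _ 0%N addn (gcdn l k).+1 k.+1 (fun d => d %| gcdn l k) totient gk).
rewrite [RHS]big_mkcond [LHS]big_mkcond; apply: eq_bigr => i _ /=.
rewrite dvdn_gcd; case: (boolP (i %| l)) => il; case: (boolP (i %| k)) => ik //=.
- by rewrite ltnS dvdn_leq ?mul1n // dvdn_gcd il.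
Qed.

Section Cnt2.
Variable T : finType.
Implicit Types (s t : {perm T}) (x y z : T).
Local Open Scope ring_scope.

Definition Gs s d : rat := \sum_x (d %| #|porbit s x|)%N%:R / #|porbit s x|%:R.

Lemma porbits_exp s k : (0 < k)%N ->
  (#|porbits (s ^+ k)%g|%:R : rat) =
  \sum_(d < k.+1 | (d %| k)%N) (totient d)%:R * Gs s d.
Proof.
move=> k0; rewrite porbits_sum.
under eq_bigr => x _ do rewrite porbit_expg natf_div ?dvdn_gcdl // invf_div gcd_tot //.
rewrite /Gs; under [RHS]eq_bigr => d _ do rewrite mulr_sumr.
rewrite exchange_big /=; apply: eq_bigr => x _.
rewrite natr_sum mulr_suml; apply: eq_bigr => d _.
by rewrite natrM mulrA [_ * (totient _)%:R]mulrC.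
Qed.

End Cnt2.

End Part5.
Import Part5.

Module Part6.
Import GRing.Theory Num.Theory.

Section Cnt3.
Variable T : finType.
Implicit Types (s t : {perm T}) (x y z : T).
Local Open Scope ring_scope.

Lemma G_eq s t :
  (forall k, (0 < k)%N -> #|porbits (s ^+ k)%g| = #|porbits (t ^+ k)%g|) ->
  forall d, (0 < d)%N -> Gs s d = Gs t d.
Proof.
move=> h; elim/ltn_ind => d IH d0.
have := congr1 (fun n : nat => n%:R : rat) (h d d0) => /=.
rewrite !porbits_exp // big_mkcond [X in _ = X]big_mkcond.
rewrite !big_ord_recr /= dvdnn.
have -> : \sum_(i < d) (if (widen_ord (leqnSn d) i %| d)%N
             then (totient (widen_ord (leqnSn d) i))%:R * Gs s (widen_ord (leqnSn d) i) else 0)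
        = \sum_(i < d) (if (widen_ord (leqnSn d) i %| d)%N
             then (totient (widen_ord (leqnSn d) i))%:R * Gs t (widen_ord (leqnSn d) i) else 0).
  apply: eq_bigr => i _ /=; case: ifP => // id.
  rewrite IH //; rewrite lt0n; apply: contraTneq id => ->.
  by rewrite dvd0n -lt0n d0.
move/addrI/mulfI; apply; by rewrite pnatr_eq0 -lt0n totient_gt0.
Qed.

Definition cnt s l := #|[set x | #|porbit s x| == l]|.

Lemma Gs_cnt s d : (0 < d)%N ->
  Gs s d = \sum_(m < #|T|.+1 | (d %| m)%N) (cnt s m)%:R / m%:R.
Proof.
move=> d0.
have -> : Gs s d = \sum_(x | (d %| #|porbit s x|)%N) (#|porbit s x|%:R)^-1.
  rewrite /Gs [RHS]big_mkcond; apply: eq_bigr => x _.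
  by case: ifP => _; rewrite ?mul1r ?mul0r.
have hl x : (#|porbit s x| < #|T|.+1)%N by rewrite ltnS max_card.
rewrite (partition_big (fun x => (inord #|porbit s x| : 'I_#|T|.+1))
           (fun m : 'I_#|T|.+1 => (d %| m)%N)); last first.
  by move=> x /=; rewrite inordK.
apply: eq_bigr => m dm.
rewrite (eq_bigl (fun x => #|porbit s x| == m)); last first.
  move=> x /=; rewrite -val_eqE /= inordK //.
  by case: eqP => [->|_]; rewrite ?dm ?andbF.
rewrite (eq_bigr (fun _ => (m%:R)^-1)); last by move=> x /eqP ->.
rewrite sumr_const /cnt [RHS]mulrC [RHS]mulr_natr; congr (_ *+ _).
by apply: eq_card => x; rewrite !inE.
Qed.

Lemma cnt0 s : cnt s 0 = 0%N.
Proof.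
apply/eqP; rewrite cards_eq0; apply/eqP/setP => x; rewrite !inE.
by rewrite eqn0Ngt porbit_gt0.
Qed.

Lemma cnt_big s l : (#|T| < l)%N -> cnt s l = 0%N.
Proof.
move=> hl; apply/eqP; rewrite cards_eq0; apply/eqP/setP => x; rewrite !inE.
apply/negbTE; apply: contraTneq hl => <-; by rewrite -leqNgt max_card.
Qed.

Lemma cnt_eq s t :
  (forall d, (0 < d)%N -> Gs s d = Gs t d) -> forall l, cnt s l = cnt t l.
Proof.
move=> hG.
pose H u m : rat := (cnt u m)%:R / m%:R.
suff HH : forall l, H s l = H t l.
  move=> l; case: (posnP l) => [->|l0]; first by rewrite !cnt0.
  have := HH l; rewrite /H => /(congr1 (fun r => r * l%:R)).
  rewrite !mulfVK ?pnatr_eq0 -?lt0n // => /eqP; rewrite eqr_nat => /eqP //.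
move=> l.
have [i] := ubnP (#|T|.+1 - l); elim: i l => [|i IH] l hi //.
case: (posnP l) => [->|l0]; first by rewrite /H !invr0 !mulr0.
case: (ltnP #|T| l) => [lb|lb]; first by rewrite /H !cnt_big.
have lT : (l < #|T|.+1)%N by rewrite ltnS.
have := hG l l0; rewrite !Gs_cnt //.
rewrite [X in X = _](bigD1 (Ordinal lT)) ?dvdnn // [X in _ = X](bigD1 (Ordinal lT)) ?dvdnn //.
rewrite (eq_bigr (fun m : 'I_#|T|.+1 => (cnt t m)%:R / m%:R)); last first.
  move=> m /andP [lm mne].
  case: (posnP m) => [m0|m0]; first by rewrite m0 !invr0 !mulr0.
  have ml : (l < m)%N.
    rewrite ltn_neqAle dvdn_leq // andbT; apply: contra mne => /eqP e.
    by apply/eqP/val_inj.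
  have mT : (m < #|T|.+1)%N := ltn_ord m.
  apply: IH; lia.
by move/addIr.
Qed.

Lemma porbits_cnt s t :
  (forall k, (0 < k)%N -> #|porbits (s ^+ k)%g| = #|porbits (t ^+ k)%g|) ->
  forall l, cnt s l = cnt t l.
Proof. by move=> h; apply: cnt_eq; apply: G_eq. Qed.

End Cnt3.

End Part6.
Import Part6.

Module Part7.

Section Fix.
Variable T : finType.
Variable s : {perm T}.
Implicit Types (A B : {set T}) (x y z : T) (P Q : {set {set T}}).

Lemma fixP A : reflect (forall z, z \in A -> s z \in A) (s @: A == A).
Proof.
rewrite eqEcard card_imset ?leqnn ?andbT; last exact: perm_inj.
apply: (iffP subsetP) => h z.
  by move=> zA; apply: h; exact: imset_f.
by case/imsetP => y yA ->; exact: h.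
Qed.

Lemma porbit_closed x z : z \in porbit s x -> s z \in porbit s x.
Proof. by move=> zx; rewrite -(porbit_eq zx); have := mem_porbit s 1 z; rewrite expg1. Qed.

Lemma triv_porbits : trivIset (porbits s).
Proof.
apply/trivIsetP => _ _ /imsetP[x _ ->] /imsetP[y _ ->] ne.
rewrite -setI_eq0; apply: contraR ne => /set0Pn [z]; rewrite inE => /andP[zx zy].
by rewrite -(porbit_eq zx) -(porbit_eq zy).
Qed.

Lemma fix_cover P : P \subset porbits s -> s @: cover P == cover P.
Proof.
move=> sP; apply/fixP => z /bigcupP [O OP zO]; apply/bigcupP; exists O => //.
by move: (subsetP sP O OP) => /imsetP [x _ eO]; rewrite eO in zO *; exact: porbit_closed.
Qed.

Lemma fix_orb A x : s @: A == A -> x \in A -> porbit s x \subset A.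
Proof. by move/fixP => h; exact: closed_porbit. Qed.

Lemma card_fix : #|[set A : {set T} | s @: A == A]| = 2 ^ #|porbits s|.
Proof.
rewrite -card_powerset.
have -> : [set A : {set T} | s @: A == A] = cover @: powerset (porbits s).
  apply/setP => A; rewrite inE; apply/idP/imsetP.
  - move=> fA; exists [set O in porbits s | O \subset A].
      by rewrite inE; apply/subsetP => O; rewrite inE => /andP[].
    apply/setP => z; apply/idP/bigcupP.
    + move=> zA; exists (porbit s z); rewrite ?porbit_id //.
      by rewrite inE imset_f //= fix_orb.
    + by move=> [O]; rewrite inE => /andP [_ /subsetP]; apply.
  - by move=> [P]; rewrite inE => sP ->; exact: fix_cover.
apply: card_in_imset => P Q; rewrite !inE => sP sQ e.
suff h : forall P Q, P \subset porbits s -> Q \subset porbits s -> cover P = cover Q ->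
   P \subset Q.
  apply/eqP; rewrite eqEsubset; apply/andP; split; first exact: h.
  by apply: h => //; exact: esym.
move=> {sP sQ e P Q} P Q sP sQ e.
apply/subsetP => O OP; have := subsetP sP O OP => /imsetP [x _ eO].
have : x \in cover Q by rewrite -e; apply/bigcupP; exists O; rewrite // eO porbit_id.
move=> /bigcupP [O' O'Q xO']; have := subsetP sQ O' O'Q => /imsetP [y _ eO'].
have xy : x \in porbit s y by rewrite -eO'.
by rewrite eO (porbit_eq xy) -eO'.
Qed.

Lemma odd_orbit : odd #|T| -> exists2 O, O \in porbits s & odd #|O|.
Proof.
move=> oT; case: (boolP [exists O in porbits s, odd #|O|]).
  by move/exists_inP.
rewrite negb_exists_in => /forall_inP h; exfalso.
have cov : cover (porbits s) = [set: T].
  apply/setP => z; rewrite inE; apply/bigcupP; exists (porbit s z).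
    exact: imset_f.
  exact: porbit_id.
move: oT; rewrite -cardsT -cov -(eqP triv_porbits).
elim/big_ind: _ => //.
  by move=> a b /negP ha /negP hb; apply/negP; rewrite oddD (negbTE ha) (negbTE hb).
by move=> O /h /negP.
Qed.

Lemma card_even_fix : odd #|T| ->
  (#|[set A : {set T} | ~~ odd #|A| && (s @: A == A)]| * 2 = 2 ^ #|porbits s|)%N.
Proof.
move=> oT; have [O0 O0p oO0] := odd_orbit oT.
have [x0 _ eO0] := imsetP O0p.
pose tog A := if O0 \subset A then A :\: O0 else A :|: O0.
have dis A : s @: A == A -> ~~ (O0 \subset A) -> A :&: O0 = set0.
  move=> fA nsub; apply/setP => z; rewrite !inE; apply/negbTE/negP => /andP[zA zO].
  by apply: (negP nsub); rewrite eO0 -(porbit_eq (x := x0) (z := z)) ?fix_orb // -eO0.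
have O0f : s @: O0 == O0 by apply/fixP; rewrite eO0; exact: porbit_closed.
have togf A : s @: A == A -> s @: tog A == tog A.
  move=> fA; rewrite /tog; case: ifP => _; apply/fixP => z; rewrite !inE.
    move=> /andP [zO zA]; rewrite (fixP _ fA) // andbT.
    apply: contra zO => szO; rewrite eO0 -(porbit_eq (x := x0) (z := s z)) -?eO0 //.
    have := mem_porbit s 1 z; rewrite expg1 => h.
    by rewrite -(porbit_eq (x := s z) (z := z)) ?porbit_id // porbit_sym.
  by case/orP => h; apply/orP; [left; exact: (fixP _ fA) | right; exact: (fixP _ O0f)].
have x0O : x0 \in O0 by rewrite eO0 porbit_id.
have togK A : s @: A == A -> tog (tog A) = A.
  move=> fA; case: (boolP (O0 \subset A)) => sub.
    have -> : tog A = A :\: O0 by rewrite /tog sub.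
    rewrite /tog.
    have -> : (O0 \subset A :\: O0) = false.
      by apply/negbTE/negP => /subsetP /(_ x0 x0O); rewrite inE x0O.
    apply/setP => z; rewrite !inE.
    by case zO: (z \in O0) => /=; [rewrite (subsetP sub) | rewrite orbF].
  have -> : tog A = A :|: O0 by rewrite /tog (negbTE sub).
  rewrite /tog subsetUr; apply/setP => z; rewrite !inE.
  case zO: (z \in O0) => /=; last by rewrite orbF.
  have := dis A fA sub; move/setP/(_ z); rewrite !inE zO andbT => ->.
  done.
have togo A : s @: A == A -> odd #|tog A| = ~~ odd #|A|.
  move=> fA; rewrite /tog; case: ifP => sub.
    rewrite cardsD (setIidPr sub) oddB ?subset_leq_card // oO0.
    by case: (odd _).
  rewrite cardsU (dis A fA (negbT sub)) cards0 subn0 oddD oO0; by case: (odd _).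
set Ev := [set A : {set T} | ~~ odd #|A| && (s @: A == A)].
set Od := [set A : {set T} | odd #|A| && (s @: A == A)].
have EO : #|Ev| = #|Od|.
  have tinj (X : {set {set T}}) : X \subset [set A : {set T} | s @: A == A] -> {in X &, injective tog}.
    move=> sX A B AX BX e.
    have fA : s @: A == A by have := subsetP sX A AX; rewrite inE.
    have fB : s @: B == B by have := subsetP sX B BX; rewrite inE.
    by rewrite -(togK A fA) e togK.
  apply/eqP; rewrite eqn_leq; apply/andP; split.
    have tEv : {in Ev &, injective tog}.
      by apply: tinj; apply/subsetP => A; rewrite !inE => /andP[].
    rewrite -(card_in_imset tEv).
    apply: subset_leq_card; apply/subsetP => y /imsetP [A]; rewrite !inE => /andP [eA fA] ->.
    by rewrite togo // eA togf.
  have tOd : {in Od &, injective tog}.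
    by apply: tinj; apply/subsetP => A; rewrite !inE => /andP[].
  rewrite -(card_in_imset tOd).
  apply: subset_leq_card; apply/subsetP => y /imsetP [A]; rewrite !inE => /andP [eA fA] ->.
  by rewrite togo // eA togf.
rewrite -card_fix muln2 -addnn {2}EO.
rewrite -(cardsID [set A : {set T} | odd #|A|] [set A : {set T} | s @: A == A]) addnC.
by congr (_ + _); apply: eq_card => A; rewrite !inE // andbC.
Qed.

End Fix.

End Part7.
Import Part7.

Module Part8.
Import GRing.Theory Num.Theory.
Local Open Scope ring_scope.

Section Rep.
Variable n : nat.
Local Notation E := (even_subset n).
Local Notation V i := (val (@enum_val E predT i)).

Lemma perm_even (s : 'S_n) (A : {set 'I_n}) : ~~ odd #|A| -> ~~ odd #|s @: A|.
Proof. by rewrite card_imset //; exact: perm_inj. Qed.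

Lemma permrepM (s t : 'S_n) : permrep s *m permrep t = permrep (t * s)%g.
Proof.
apply/matrixP => i j; rewrite !mxE.
pose S := (exist _ (t @: V j) (perm_even t (valP (enum_val j))) : E).
rewrite (bigD1 (enum_rank S)) //= !mxE enum_rankK /= eqxx mulr1.
rewrite big1 ?addr0.
  by rewrite -imset_comp; congr ((_ == _)%:R); apply: eq_imset => x; rewrite permM.
move=> k kne; rewrite !mxE.
case: (boolP (V k == t @: V j)) => [/eqP e|_]; last by rewrite mulr0.
exfalso; apply: (negP kne); apply/eqP.
apply: (canRL enum_valK); apply: val_inj; exact: e.
Qed.

Lemma permrep1 : permrep (1%g : 'S_n) = 1%:M.
Proof.
apply/matrixP => i j; rewrite !mxE.
have -> : (1%g : 'S_n) @: V j = V j.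
  by rewrite -[RHS]imset_id; apply: eq_imset => x; rewrite perm1.
by rewrite (inj_eq val_inj) (inj_eq enum_val_inj).
Qed.

Lemma permrepX (s : 'S_n) k : permrep s ^+ k = permrep (s ^+ k)%g.
Proof.
elim: k => [|k IH]; first by rewrite expr0 expg0 permrep1.
by rewrite exprS IH -mulmxE permrepM -expgSr.
Qed.

Lemma trace_permrep (s : 'S_n) :
  \tr (permrep s) = (#|[set A : {set 'I_n} | ~~ odd #|A| && (s @: A == A)]|)%:R.
Proof.
rewrite /mxtrace.
under eq_bigr => i _ do rewrite mxE.
have -> : \sum_(i < nev n) ((V i == s @: V i)%:R : algC) =
          \sum_(S : E) ((val S == s @: val S)%:R : algC).
  by rewrite (big_enum_val_cond (A := predT) xpredT (fun S : E => ((val S == s @: val S)%:R : algC))).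
rewrite -natr_sum; congr (_%:R).
rewrite (eq_bigr (fun S : E => if val S == s @: val S then 1%N else 0%N)); last first.
  by move=> S _; case: (_ == _).
rewrite -big_mkcond sum1dep_card.
rewrite -(card_imset _ val_inj); apply: eq_card => A; rewrite !inE.
apply/imsetP/idP.
  by move=> [S]; rewrite inE => /eqP e ->; rewrite (valP S) -e eqxx.
move=> /andP [eA fA]; exists (exist _ A eA : E) => //.
by rewrite inE /= eq_sym.
Qed.

End Rep.

End Part8.
Import Part8.

Import GRing.Theory Num.Theory.
Local Open Scope ring_scope.

Theorem theorem3p9 (n : nat) : odd n -> ~ unites_classes (@permrep n).
Proof.
move=> on [s [t [nconj [P Pu sim]]]].
move/(similarRL Pu): sim => e.
have trk k : \tr (permrep (t ^+ k)%g) = \tr (permrep (s ^+ k)%g).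
  rewrite -!permrepX e.
  have -> : (P *m permrep s *m invmx P) ^+ k = P *m permrep s ^+ k *m invmx P.
    elim: k => [|k IH]; first by rewrite !expr0 mulmx1 mulmxV.
    rewrite !exprS IH -!mulmxE !mulmxA mulmxKV //.
  by rewrite mxtrace_mulC mulmxA mulVmx // mul1mx.
have ck k : #|porbits (s ^+ k)%g| = #|porbits (t ^+ k)%g|.
  have := trk k; rewrite !trace_permrep => /eqP; rewrite eqr_nat => /eqP h.
  have oT : odd #|'I_n| by rewrite card_ord.
  have := card_even_fix (s ^+ k)%g oT; have := card_even_fix (t ^+ k)%g oT.
  by rewrite h => -> /eqP; rewrite eqn_exp2l // => /eqP.
apply: (negP nconj); apply: conj_cnt => l.
exact: (porbits_cnt (fun k _ => ck k)).
Qed.
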